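(* As formal power series in $x, y, z$, $$\sum_{p,q,k \ge 0} u((p,q),k)\, x^p y^q z^k \;=\; \frac{1}{1-(1+z)(x+y-xy)}.$$
   Context: Let $\mathbb{N} = \{0,1,2,\dots\}$. For $(p,q) \in \mathbb{N}^2$ and $n \in \mathbb{N}$, an unrestricted generalized jump path of length $n$ starting at $(p,q)$ is a sequence $(x_0, \dots, x_n)$ of points of $\mathbb{N}^2$ satisfying three conditions: - $x_0 = (p,q)$; - for every $i$, each coordinate of $x_{i+1}$ is at most the corresponding coordinate of $x_i$; - $x_{i+1} \ne x_i$ for every $i$. Let $u((p,q),n)$ denote the number of such paths. *)

(* Defs.v *)
From HB Require Import structures.
From mathcomp Require Import all_boot all_order all_algebra.
Set Implicit Arguments. Unset Strict Implicit. Unset Printing Implicit Defensive.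
Import Order.TTheory GRing.Theory Num.Theory.

Definition le_pt (a b : nat * nat) : bool := (a.1 <= b.1) && (a.2 <= b.2).

Definition is_ugj_path (p q n : nat) (s : seq (nat * nat)) : bool :=
  [&& size s == n.+1, nth (0,0) s 0 == (p, q)
    & all (fun i => le_pt (nth (0,0) s i.+1) (nth (0,0) s i)
                    && (nth (0,0) s i.+1 != nth (0,0) s i)) (iota 0 n)].

(* Every point of such a path lies in the box [0,p] x [0,q], so the paths are
   counted among the (n+1)-tuples of points of that finite box. *)
Definition u (pq : nat * nat) (n : nat) : nat :=
  #|[set t : n.+1.-tuple ('I_pq.1.+1 * 'I_pq.2.+1) |
      is_ugj_path pq.1 pq.2 n
        (map (fun a : 'I_pq.1.+1 * 'I_pq.2.+1 => (val a.1, val a.2)) t)]|.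

(* Formal power series in x, y, z with integer coefficients:
   F a b c is the coefficient of x^a y^b z^c. *)
Definition ps := nat -> nat -> nat -> int.

Definition ps_one : ps := fun a b c => ((a == 0) && (b == 0) && (c == 0))%:R%R.
Definition ps_x : ps := fun a b c => ((a == 1) && (b == 0) && (c == 0))%:R%R.
Definition ps_y : ps := fun a b c => ((a == 0) && (b == 1) && (c == 0))%:R%R.
Definition ps_z : ps := fun a b c => ((a == 0) && (b == 0) && (c == 1))%:R%R.
Definition ps_add (F G : ps) : ps := fun a b c => (F a b c + G a b c)%R.
Definition ps_sub (F G : ps) : ps := fun a b c => (F a b c - G a b c)%R.
Definition ps_mul (F G : ps) : ps := fun a b c =>
  (\sum_(i < a.+1) \sum_(j < b.+1) \sum_(k < c.+1)
     F i j k * G (a - i)%N (b - j)%N (c - k)%N)%R.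

Definition u_gf : ps := fun p q k => Posz (u (p, q) k).

Definition denom : ps :=
  ps_sub ps_one (ps_mul (ps_add ps_one ps_z)
                        (ps_sub (ps_add ps_x ps_y) (ps_mul ps_x ps_y))).

(* Main.v *)
Require Import Defs.
From mathcomp Require Import all_boot all_order all_algebra.
From mathcomp Require Import zify.
Set Implicit Arguments. Unset Strict Implicit. Unset Printing Implicit Defensive.

Lemma path0 p q s : is_ugj_path p q 0 s = (s == [:: (p, q)]).
Proof.
rewrite /is_ugj_path /= andbT.
case: s => [|x [|y s]] //=.
  by rewrite eqseq_cons eqxx andbT.
by rewrite eqseq_cons /= andbF.
Qed.

Lemma pathS p q n s : is_ugj_path p q n.+1 s =
  if s is x :: s' then (x == (p, q)) &&
    (if s' is y :: _ then [&& le_pt y x, y != x & is_ugj_path y.1 y.2 n s']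
     else false)
  else false.
Proof.
rewrite /is_ugj_path.
case: s => [|x [|y s]] //=; first by rewrite andbF.
rewrite !eqSS -[1]/(1 + 0) iotaDl all_map /=.
case: y => a b /=; rewrite eqxx /=.
set A := all (preim _ _) _.
by case: (size s == n); case: (x == (p,q)); case: (le_pt _ _); case: (_ != _); case: A.
Qed.

Definition boxl (p q : nat) : seq (nat * nat) :=
  [seq (i, j) | i <- iota 0 p.+1, j <- iota 0 q.+1].
Definition preds p q := [seq ij <- boxl p q | ij != (p, q)].

Lemma mem_boxl p q ij : (ij \in boxl p q) = le_pt ij (p, q).
Proof.
case: ij => i j; rewrite /le_pt /=.
apply/allpairsP/idP.
  case=> [[a b]] [ha hb [-> ->]]; move: ha hb; rewrite !mem_iota /=.
  by move=> ha hb; apply/andP; split; lia.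
move=> /andP[hi hj]; exists (i, j); rewrite !mem_iota /=; split => //; lia.
Qed.

Lemma uniq_boxl p q : uniq (boxl p q).
Proof.
apply: allpairs_uniq; rewrite ?iota_uniq //.
by move=> [a b] [c d] _ _ /=.
Qed.

Lemma mem_preds p q ij : (ij \in preds p q) = (ij != (p, q)) && le_pt ij (p, q).
Proof. by rewrite mem_filter mem_boxl. Qed.

Fixpoint paths (p q n : nat) : seq (seq (nat * nat)) :=
  if n is n'.+1 then
    [seq (p, q) :: t | ij <- preds p q, t <- paths ij.1 ij.2 n']
  else [:: [:: (p, q)]].

Lemma le_pt_trans a b c : le_pt a b -> le_pt b c -> le_pt a c.
Proof. rewrite /le_pt => /andP[? ?] /andP[? ?]; apply/andP; split; lia. Qed.

Lemma mem_paths n p q s : (s \in paths p q n) = is_ugj_path p q n s.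
Proof.
elim: n p q s => [|n IH] p q s.
  by rewrite path0 /= inE.
rewrite pathS /=; apply/allpairsPdep/idP.
  case=> [[i j]] [t] [] /= /[!mem_preds] /andP[nij lij].
  rewrite IH => ht ->; rewrite eqxx /=.
  case: t ht => [|y t]; first by rewrite /is_ugj_path.
  move=> ht; have hy : y = (i, j).
    by move: ht; rewrite /is_ugj_path => /and3P[_ /eqP].
  by subst y; rewrite lij nij.
case: s => [|x [|y t]] //=; first by rewrite andbF.
move=> /andP[/eqP ex H].
case/and3P: H => ly ny ht; subst x.
exists y, (y :: t); split => //; first by rewrite mem_preds ny ly.
by rewrite IH.
Qed.

Lemma head_paths n p q t : t \in paths p q n -> nth (0,0) t 0 = (p, q).
Proof. by rewrite mem_paths => /and3P[_ /eqP]. Qed.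

Lemma uniq_paths n p q : uniq (paths p q n).
Proof.
elim: n p q => [|n IH] p q //=.
apply: allpairs_uniq_dep.
- by rewrite filter_uniq // uniq_boxl.
- by move=> ij _; apply: IH.
move=> [ij t] [ij' t'] /allpairsPdep [a [b [_ hb [-> ->]]]].
move=> /allpairsPdep [a' [b' [_ hb' [-> ->]]]] /= [eb]; subst b'.
have := head_paths hb; rewrite (head_paths hb') => e.
have -> : a = a' by case: a a' e {hb hb'} => ? ? [? ?] [-> ->].
by [].
Qed.

Lemma path_box n p q s : is_ugj_path p q n s -> forall z, z \in s -> le_pt z (p, q).
Proof.
elim: n p q s => [|n IH] p q s.
  by rewrite path0 => /eqP -> z; rewrite inE => /eqP ->; rewrite /le_pt /= !leqnn.
rewrite pathS; case: s => [|x [|y t]] //; first by rewrite andbF.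
move=> /andP[/eqP ex H]; case/and3P: H => ly _ ht; subst x.
move=> z; rewrite inE => /orP[/eqP -> | hz]; first by rewrite /le_pt /= !leqnn.
apply: le_pt_trans ly.
exact: (IH _ _ _ ht) z hz.
Qed.

Lemma u_size p q n : u (p, q) n = size (paths p q n).
Proof.
rewrite /u /=.
set g := fun a : 'I_p.+1 * 'I_q.+1 => (val a.1, val a.2).
set A := [set t : n.+1.-tuple _ | _].
have ginj : injective g.
  by move=> [a b] [c d] [/val_inj -> /val_inj ->].
rewrite cardE -(size_map (fun t : n.+1.-tuple _ => map g t)).
apply: perm_size; apply: uniq_perm.
- rewrite map_inj_uniq ?enum_uniq //.
  by move=> t t' /(inj_map ginj) /val_inj.
- exact: uniq_paths.
move=> s; rewrite mem_paths; apply/mapP/idP.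
  by case=> t; rewrite mem_enum inE => ht ->.
move=> hs.
pose h := fun x : nat * nat => ((inord x.1 : 'I_p.+1), (inord x.2 : 'I_q.+1)).
have ghs : map g (map h s) = s.
  rewrite -map_comp -[RHS]map_id; apply/eq_in_map => x /(path_box hs).
  case: x => a b /andP [ha hb] /=.
  by rewrite /g /= !inordK.
have sz : size (map h s) == n.+1 by rewrite size_map; case/and3P: hs.
exists (Tuple sz); last by rewrite /= ghs.
by rewrite mem_enum inE /= ghs.
Qed.

Lemma u0 p q : u (p, q) 0 = 1.
Proof. by rewrite u_size. Qed.

Definition T p q n := \sum_(i < p.+1) \sum_(j < q.+1) u (i : nat, j : nat) n.

Lemma uS p q n : u (p, q) n.+1 + u (p, q) n = T p q n.
Proof.
rewrite !u_size /= size_allpairs_dep sumnE big_map.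
have -> : T p q n = \sum_(ij <- boxl p q) size (paths ij.1 ij.2 n).
  rewrite /boxl big_allpairs_dep /= /T.
  rewrite -(big_mkord xpredT (fun i : nat => \sum_(j < q.+1) u (i, j : nat) n)).
  rewrite /index_iota subn0; apply: eq_bigr => i _.
  rewrite -(big_mkord xpredT (fun j : nat => u (i, j) n)).
  by rewrite /index_iota subn0; apply: eq_bigr => j _; rewrite u_size.
rewrite [RHS](bigD1_seq (p, q)) ?uniq_boxl //; last by rewrite mem_boxl /le_pt /= !leqnn.
by rewrite /preds big_filter addnC.
Qed.
Import GRing.Theory.
Local Open Scope ring_scope.

Definition delta (i0 j0 k0 : nat) : ps :=
  fun a b c => ((a == i0) && (b == j0) && (c == k0))%:R.

Lemma ind3 (x : int) b1 b2 b3 :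
  x * (b1 && b2 && b3)%:R = if b1 then if b2 then if b3 then x else 0 else 0 else 0.
Proof. by case: b1; case: b2; case: b3; rewrite /= ?mulr1 ?mulr0. Qed.

Lemma ind3l (x : int) b1 b2 b3 :
  (b1 && b2 && b3)%:R * x = if b1 then if b2 then if b3 then x else 0 else 0 else 0.
Proof. by rewrite mulrC ind3. Qed.

Lemma sum_pick a i0 (G : nat -> int) :
  \sum_(i < a.+1) (if (a - i == i0)%N then G i else 0) =
  if (i0 <= a)%N then G (a - i0)%N else 0.
Proof.
rewrite -big_mkcond /=.
rewrite (eq_bigl (fun i : 'I_a.+1 => (i0 <= a)%N && (i == (a - i0)%N :> nat))).
  by rewrite (big_ord1_cond_eq _ _ (fun _ => (i0 <= a)%N)) ltnS leq_subr.
move=> i /=; have := ltn_ord i; rewrite ltnS => hi.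
apply/eqP/andP; [move=> h; split; [|apply/eqP]; lia | case=> h /eqP; lia].
Qed.

Lemma sum_pick0 a i0 (G : nat -> int) :
  \sum_(i < a.+1) (if (i == i0 :> nat) then G i else 0) =
  if (i0 <= a)%N then G i0 else 0.
Proof. by rewrite -big_mkcond big_ord1_eq ltnS. Qed.

Lemma sum_if n (b : bool) (G : 'I_n -> int) :
  \sum_(j < n) (if b then G j else 0) = if b then \sum_(j < n) G j else 0.
Proof. by case: b => //; rewrite big1. Qed.

Lemma mul_delta_r F i0 j0 k0 a b c :
  ps_mul F (delta i0 j0 k0) a b c =
  if [&& (i0 <= a)%N, (j0 <= b)%N & (k0 <= c)%N]
  then F (a - i0)%N (b - j0)%N (c - k0)%N else 0.
Proof.
rewrite /ps_mul /delta.
under eq_bigr => i _ do under eq_bigr => j _ do under eq_bigr => k _ do rewrite ind3.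
under eq_bigr => i _ do under eq_bigr => j _ do
  rewrite sum_if sum_if (sum_pick c k0 (F i j)).
under eq_bigr => i _ do
  rewrite sum_if (sum_pick b j0 (fun j => if (k0 <= c)%N then F i j (c - k0)%N else 0)).
rewrite (sum_pick a i0 (fun i => if (j0 <= b)%N then if (k0 <= c)%N then F i (b - j0)%N (c - k0)%N else 0 else 0)).
by case: (i0 <= a)%N; case: (j0 <= b)%N; case: (k0 <= c)%N.
Qed.

Lemma mul_delta_l G i0 j0 k0 a b c :
  ps_mul (delta i0 j0 k0) G a b c =
  if [&& (i0 <= a)%N, (j0 <= b)%N & (k0 <= c)%N]
  then G (a - i0)%N (b - j0)%N (c - k0)%N else 0.
Proof.
rewrite /ps_mul /delta.
under eq_bigr => i _ do under eq_bigr => j _ do under eq_bigr => k _ do rewrite ind3l.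
under eq_bigr => i _ do under eq_bigr => j _ do
  rewrite sum_if sum_if (sum_pick0 c k0 (fun k => G (a - i) (b - j) (c - k))%N).
under eq_bigr => i _ do
  rewrite sum_if (sum_pick0 b j0 (fun j => if (k0 <= c)%N then G (a - i) (b - j) (c - k0) else 0)%N).
rewrite (sum_pick0 a i0 (fun i => if (j0 <= b)%N then if (k0 <= c)%N then G (a - i) (b - j0) (c - k0) else 0 else 0)%N).
by case: (i0 <= a)%N; case: (j0 <= b)%N; case: (k0 <= c)%N.
Qed.

Lemma mul_addr F G H a b c :
  ps_mul F (ps_add G H) a b c = ps_mul F G a b c + ps_mul F H a b c.
Proof.
rewrite /ps_mul -big_split; apply: eq_bigr => i _.
rewrite -big_split; apply: eq_bigr => j _.
rewrite -big_split; apply: eq_bigr => k _; by rewrite /ps_add mulrDr.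
Qed.

Lemma mul_subr F G H a b c :
  ps_mul F (ps_sub G H) a b c = ps_mul F G a b c - ps_mul F H a b c.
Proof.
rewrite /ps_mul -sumrB; apply: eq_bigr => i _.
rewrite -sumrB; apply: eq_bigr => j _.
rewrite -sumrB; apply: eq_bigr => k _; by rewrite /ps_sub mulrBr.
Qed.

Lemma mul_addl F G H a b c :
  ps_mul (ps_add F G) H a b c = ps_mul F H a b c + ps_mul G H a b c.
Proof.
rewrite /ps_mul -big_split; apply: eq_bigr => i _.
rewrite -big_split; apply: eq_bigr => j _.
rewrite -big_split; apply: eq_bigr => k _; by rewrite /ps_add mulrDl.
Qed.

Lemma mul_congr F G H a b c : (forall a b c, G a b c = H a b c) ->
  ps_mul F G a b c = ps_mul F H a b c.
Proof.
move=> e; apply: eq_bigr => i _; apply: eq_bigr => j _; apply: eq_bigr => k _.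
by rewrite e.
Qed.

Definition D : ps :=
  ps_add (ps_sub (ps_sub (ps_add (ps_sub (ps_sub (delta 0 0 0) (delta 1 0 0))
     (delta 0 1 0)) (delta 1 1 0)) (delta 1 0 1)) (delta 0 1 1)) (delta 1 1 1).

Lemma denomE a b c : denom a b c = D a b c.
Proof.
rewrite /denom /D /ps_sub /ps_add.
rewrite mul_addl -/(delta 0 0 0) -/(delta 0 0 1) /ps_one /ps_z.
rewrite -/(delta 0 0 0) -/(delta 0 0 1).
rewrite !mul_delta_l !subn0 /delta /ps_x /ps_y.
by case: a => [|[|a]]; case: b => [|[|b]]; case: c => [|[|c]].
Qed.

Lemma TrecP p q n : T p.+1 q n = (T p q n + \sum_(j < q.+1) u (p.+1, j : nat) n)%N.
Proof. by rewrite /T big_ord_recr. Qed.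
Lemma Trec0 q n : T 0 q n = (\sum_(j < q.+1) u (0, j : nat) n)%N.
Proof. by rewrite /T big_ord1. Qed.
Lemma Srec p q n : (\sum_(j < q.+2) u (p, j : nat) n = \sum_(j < q.+1) u (p, j : nat) n + u (p, q.+1) n)%N.
Proof. by rewrite big_ord_recr. Qed.
Lemma S0 p n : (\sum_(j < 1) u (p, j : nat) n = u (p, 0) n)%N.
Proof. by rewrite big_ord1. Qed.

From Stdlib Require Import FunctionalExtensionality.

Theorem mainTheorem5 : ps_mul u_gf denom = ps_one.
Proof.
apply: functional_extensionality => a; apply: functional_extensionality => b.
apply: functional_extensionality => c.
rewrite (mul_congr u_gf a b c denomE) /D !(mul_addr, mul_subr) !mul_delta_r /u_gf /ps_one.
rewrite !subn0.
case: c => [|n].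
  rewrite !u0; case: a => [|a]; case: b => [|b] //=.
have h0 := uS 0 0 n; have t00 := Trec0 0 n; rewrite S0 in t00.
case: a => [|a]; case: b => [|b]; rewrite /= ?subn1 /=.
- lia.
- have h1 := uS 0 b n; have h2 := uS 0 b.+1 n.
  have t1 := Trec0 b n; have t2 := Trec0 b.+1 n; have s1 := Srec 0 b n.
  lia.
- have h1 := uS a 0 n; have h2 := uS a.+1 0 n.
  have t1 := TrecP a 0 n; rewrite S0 in t1.
  lia.
- have h1 := uS a b n; have h2 := uS a.+1 b n; have h3 := uS a b.+1 n.
  have h4 := uS a.+1 b.+1 n.
  have t1 := TrecP a b n; have t2 := TrecP a b.+1 n; have s1 := Srec a.+1 b n.
  lia.
Qed.
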